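(* Let $d \geq 2$ and $n$ be positive integers. Let $\mathcal{S}_{n,d}$ be the family of all maximal spherical sets of $[n]^d$. Then the VC-dimension of the set system $([n]^d, \mathcal{S}_{n,d})$ is at most $d+1$.
   Context: $[n]=\{1,\dots,n\}$. A sphere is a $(d-1)$-dimensional sphere in $\mathbb{R}^d$. A subset $A \subset [n]^d$ is a maximal spherical set of $[n]^d$ if all points of $A$ lie on a single sphere $S$ in $\mathbb{R}^d$ and no point of $[n]^d$ can be added to $A$ while keeping all points on $S$ (i.e. $A = S \cap [n]^d$ for some sphere $S$). For a set system $\mathcal{F}$ on ground set $P$, a set $T \subset P$ is shattered if for every $B \subset T$ there is $F \in \mathcal{F}$ with $F \cap T = B$; the VC-dimension is the largest size of a shattered subset of $P$. *)

(* Defs.v *)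
From HB Require Import structures.
From mathcomp Require Import all_boot all_order all_algebra.
From mathcomp Require Import reals.
Set Implicit Arguments. Unset Strict Implicit. Unset Printing Implicit Defensive.
Import Order.TTheory GRing.Theory Num.Theory.
Local Open Scope ring_scope.

(* A point of the grid [n]^d : coordinate i is the integer (x i) + 1 in {1..n}. *)
Definition gridpt (n d : nat) := {ffun 'I_d -> 'I_n}.

Definition coord (R : realType) n d (x : gridpt n d) (i : 'I_d) : R :=
  ((nat_of_ord (x i)).+1)%:R.

Definition on_sphere (R : realType) n d (c : 'I_d -> R) (r : R) (x : gridpt n d) : bool :=
  \sum_(i < d) (coord R x i - c i) ^+ 2 == r ^+ 2.

Definition maximal_spherical (R : realType) n d (A : {set gridpt n d}) : Prop :=
  exists (c : 'I_d -> R) (r : R), 0 < r /\ A = [set x | on_sphere c r x].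

Definition shattered (T : finType) (F : {set T} -> Prop) (X : {set T}) : Prop :=
  forall B : {set T}, B \subset X -> exists A, F A /\ A :&: X = B.

Definition VC_dim_le (T : finType) (F : {set T} -> Prop) (k : nat) : Prop :=
  forall X : {set T}, shattered F X -> (#|X| <= k)%N.

(* Main.v *)
Require Import Defs.
From mathcomp Require Import all_boot all_order all_algebra.
From mathcomp Require Import reals.
From mathcomp Require Import ring.
Set Implicit Arguments. Unset Strict Implicit. Unset Printing Implicit Defensive.
Import Order.TTheory GRing.Theory Num.Theory.
Local Open Scope ring_scope.

Section Aux.
Variables (R : realType) (n d : nat).

Definition vrow (x : gridpt n d) : 'rV[R]_(d + 1 + 1) :=
  row_mx (row_mx (\row_i Defs.coord R x i) (\row_(j < 1) \sum_i Defs.coord R x i ^+ 2))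
         (\row_(j < 1) 1).

Definition wcol (c : 'I_d -> R) (r : R) : 'cV[R]_(d + 1 + 1) :=
  col_mx (col_mx (\col_i (-2 * c i)) (\col_(j < 1) 1))
         (\col_(j < 1) (\sum_i c i ^+ 2 - r ^+ 2)).

Lemma vw_val x c r :
  (vrow x *m wcol c r) 0 0 = \sum_i (Defs.coord R x i - c i) ^+ 2 - r ^+ 2.
Proof.
rewrite /vrow /wcol !mul_row_col !mxE !big_ord1 !mxE.
have -> : \sum_i (Defs.coord R x i - c i) ^+ 2 =
  \sum_i (Defs.coord R x i * (-2 * c i)) + \sum_i Defs.coord R x i ^+ 2 + \sum_i c i ^+ 2.
  rewrite -!big_split /=; apply: eq_bigr => i _; ring.
under eq_bigr do rewrite !mxE.
ring.
Qed.

Lemma on_sphereE c r x : on_sphere c r x = ((vrow x *m wcol c r) 0 0 == 0).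
Proof. by rewrite vw_val subr_eq0. Qed.

Lemma wcol_neq0 c r : wcol c r != 0.
Proof.
apply/negP => /eqP/matrixP/(_ (lshift 1 (rshift d 0)) 0).
by rewrite /wcol col_mxEu col_mxEd !mxE => /eqP; rewrite oner_eq0.
Qed.
End Aux.

Theorem lemma2p2 (R : realType) (n d : nat) (hn : (0 < n)%N) (hd : (2 <= d)%N) :
  VC_dim_le (@maximal_spherical R n d) d.+1.
Proof.
move=> X sh; rewrite leqNgt; apply/negP => hX.
have h : (d + 1 + 1 <= #|X|)%N by rewrite !addn1.
pose f (i : 'I_(d + 1 + 1)) : gridpt n d := enum_val (widen_ord h i).
have fX i : f i \in X by exact: enum_valP.
have finj : injective f.
  by move=> i j /enum_val_inj/(congr1 val)/= /val_inj.
pose M : 'M[R]_(d + 1 + 1) := \matrix_i vrow R (f i).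
have Mw c r i : (M *m wcol c r) i 0 = (vrow R (f i) *m wcol c r) 0 0.
  have -> : vrow R (f i) = row i M by rewrite rowK.
  by rewrite -row_mul [RHS]mxE.
have [A0 [[c0 [r0 [_ hA0e]]] hA0]] := sh X (subxx X); subst A0.
have hdet : \det M == 0.
  rewrite -det_tr; apply/det0P; exists (wcol c0 r0)^T.
    by rewrite trmx_eq0 wcol_neq0.
  rewrite -trmx_mul; apply/eqP; rewrite trmx_eq0; apply/eqP/matrixP => i j.
  rewrite ord1 Mw [RHS]mxE; apply/eqP; rewrite -on_sphereE.
  move: (fX i); rewrite -{1}hA0 => /setIP [].
  by rewrite inE.
have [mu mu0 muM] := det0P hdet.
have [p hp] : exists p, mu 0 p != 0.
  apply/existsP; apply: contraNT mu0 => /existsPn hall.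
  apply/eqP/matrixP => i j; rewrite ord1 mxE; exact/eqP/negPn/hall.
have [|A [[c [r [_ hAe]]] hA]] := sh (X :\ f p); first exact: subD1set.
subst A.
have hval i : i != p -> (vrow R (f i) *m wcol c r) 0 0 = 0.
  move=> ip; apply/eqP; rewrite -on_sphereE.
  have : f i \in X :\ f p by rewrite !inE fX (inj_eq finj) ip.
  by rewrite -hA => /setIP []; rewrite inE.
have : ((mu *m M) *m wcol c r) 0 0 = 0 by rewrite muM mul0mx mxE.
rewrite -mulmxA mxE (bigD1 p) //= big1 ?addr0; last first.
  by move=> i ip; rewrite Mw hval ?mulr0.
move/eqP; rewrite Mw mulf_eq0 (negbTE hp) /= -on_sphereE => hs.
have : f p \in X :\ f p by rewrite -hA; apply/setIP; split => //; rewrite inE.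
by rewrite !inE eqxx.
Qed.
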